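(* Let $G$ be a simple, undirected, connected graph on $N$ vertices with edge set $E$ and degree sequence $d_1\le d_2\le\cdots\le d_N$. Then $$R^+(G)\ge N(N-4)+2|E|\sum_{j=1}^N\frac{1}{d_j}.$$
   Context: For vertices $i,j$ of $G$, $R_{ij}$ denotes the effective resistance between $i$ and $j$ when every edge of $G$ is a unit resistor. The additive degree-Kirchhoff index is $R^+(G)=\sum_{i<j}(d_i+d_j)R_{ij}$, where $d_i$ is the degree of vertex $i$. *)

(* Defs.v *)
From mathcomp Require Import all_boot all_order all_algebra.
Set Implicit Arguments. Unset Strict Implicit. Unset Printing Implicit Defensive.
Import Order.TTheory GRing.Theory Num.Theory.
Local Open Scope ring_scope.

Definition simple_graph (N : nat) (e : rel 'I_N) : Prop :=
  symmetric e /\ irreflexive e.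

Definition connected_graph (N : nat) (e : rel 'I_N) : Prop :=
  forall x y : 'I_N, connect e x y.

Definition deg (N : nat) (e : rel 'I_N) (x : 'I_N) : nat :=
  #|[set y | e x y]|.

Definition edges (N : nat) (e : rel 'I_N) : {set {set 'I_N}} :=
  [set [set x; y] | x in 'I_N, y in 'I_N & e x y].

(* v is a node potential of the unit-resistor network when a unit current
   enters at i and leaves at j (Kirchhoff's current law: L v = e_i - e_j). *)
Definition unit_potential (R : realFieldType) (N : nat) (e : rel 'I_N)
    (i j : 'I_N) (v : 'I_N -> R) : Prop :=
  forall x : 'I_N,
    (deg e x)%:R * v x - \sum_(y < N | e x y) v y
      = (x == i)%:R - (x == j)%:R.

Definition effective_resistance (R : realFieldType) (N : nat) (e : rel 'I_N)
    (Rm : 'I_N -> 'I_N -> R) : Prop :=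
  forall i j : 'I_N, exists v : 'I_N -> R,
    unit_potential e i j v /\ Rm i j = v i - v j.

Definition add_deg_kirchhoff (R : realFieldType) (N : nat) (e : rel 'I_N)
    (Rm : 'I_N -> 'I_N -> R) : R :=
  \sum_(i < N) \sum_(j < N | (i < j)%N)
     ((deg e i)%:R + (deg e j)%:R) * Rm i j.

(* Main.v *)
Require Import Defs.
From mathcomp Require Import all_boot all_order all_algebra.
From mathcomp Require Import ring lra.
Set Implicit Arguments. Unset Strict Implicit. Unset Printing Implicit Defensive.
Import Order.TTheory GRing.Theory Num.Theory.
Local Open Scope ring_scope.

Definition Lap (R : realFieldType) (N : nat) (e : rel 'I_N) (g : 'I_N -> R) x :=
  (deg e x)%:R * g x - \sum_(y < N | e x y) g y.
Definition Qf (R : realFieldType) (N : nat) (e : rel 'I_N) (f g : 'I_N -> R) :=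
  \sum_(x < N) \sum_(y < N | e x y) (f x - f y) * (g x - g y).

Lemma degE (R : realFieldType) N (e : rel 'I_N) x :
  (deg e x)%:R = \sum_(y < N | e x y) (1 : R).
Proof. by rewrite /deg -sum1_card natr_sum; apply: eq_bigl => y; rewrite inE. Qed.

Lemma degE' (R : realFieldType) N (e : rel 'I_N) x :
  (deg e x)%:R = \sum_(y < N) ((e x y)%:R : R).
Proof. rewrite degE big_mkcond; apply: eq_bigr => y _; by case: (e x y). Qed.

Lemma sum_swap (R : realFieldType) N (e : rel 'I_N) (F : 'I_N -> 'I_N -> R) :
  symmetric e ->
  \sum_(x < N) \sum_(y < N | e x y) F x y = \sum_(x < N) \sum_(y < N | e x y) F y x.
Proof.
move=> es.
rewrite (eq_bigr (fun x => \sum_(y < N) (if e x y then F x y else 0))); last first.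
  by move=> x _; rewrite big_mkcond.
rewrite exchange_big; apply: eq_bigr => x _; rewrite [RHS]big_mkcond.
by apply: eq_bigr => y _; rewrite es.
Qed.

Lemma QB (R : realFieldType) N (e : rel 'I_N) (f g : 'I_N -> R) :
  symmetric e -> Qf e f g = 2 * \sum_(x < N) f x * Lap e g x.
Proof.
move=> es.
have H1 : \sum_(x < N) f x * Lap e g x =
   \sum_(x < N) \sum_(y < N | e x y) f x * (g x - g y).
  apply: eq_bigr => x _; rewrite /Lap degE big_distrl -sumrB mulr_sumr /=.
  by apply: eq_bigr => y _; rewrite mul1r mulrBr. 
rewrite H1 /Qf.
have -> : \sum_(x < N) \sum_(y < N | e x y) (f x - f y) * (g x - g y) =
  \sum_(x < N) \sum_(y < N | e x y) f x * (g x - g y) +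
  \sum_(x < N) \sum_(y < N | e x y) f y * (g y - g x).
  rewrite -big_split; apply: eq_bigr => x _; rewrite -big_split.
  by apply: eq_bigr => y _ /=; ring.
rewrite (sum_swap (fun x y => f y * (g y - g x)) es) /=.
ring.
Qed.

Lemma Qexp (R : realFieldType) N (e : rel 'I_N) (u v : 'I_N -> R) :
  Qf e (fun x => v x - u x) (fun x => v x - u x) = Qf e v v - 2 * Qf e u v + Qf e u u.
Proof.
rewrite /Qf mulr_sumr -sumrB -big_split; apply: eq_bigr => x _ /=.
rewrite mulr_sumr -sumrB -big_split; apply: eq_bigr => y _ /=; ring.
Qed.

Lemma Qge0 (R : realFieldType) N (e : rel 'I_N) (f : 'I_N -> R) : 0 <= Qf e f f.
Proof.
apply: sumr_ge0 => x _; apply: sumr_ge0 => y _; by rewrite -expr2 sqr_ge0.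
Qed.

Lemma sum_ind (R : realFieldType) N (F : 'I_N -> R) i :
  \sum_(x < N) (x == i)%:R * F x = F i.
Proof.
rewrite (bigD1 i) //= eqxx mul1r big1 ?addr0 // => x /negbTE ->; by rewrite mul0r.
Qed.

Lemma sum_indP (R : realFieldType) N (P : pred 'I_N) (c : R) j :
  \sum_(y < N | P y) (y == j)%:R * c = (P j)%:R * c.
Proof.
rewrite big_mkcond (bigD1 j) //= eqxx big1 ?addr0.
  by case: (P j); rewrite ?mul1r ?mul0r.
by move=> y /negbTE ->; case: (P y); rewrite ?mul0r.
Qed.

Lemma pair_bound (R : realFieldType) N (e : rel 'I_N) i j (v : 'I_N -> R) (a b : R) :
  symmetric e -> irreflexive e -> i != j -> unit_potential e i j v ->
  2 * (a + b) - ((deg e i)%:R * a^+2 + 2 * a * b * (e i j)%:R + (deg e j)%:R * b^+2)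
    <= v i - v j.
Proof.
move=> es ei ij hv.
pose u := fun x : 'I_N => (x == i)%:R * a - (x == j)%:R * b.
have Lv : forall x, Lap e v x = (x == i)%:R - (x == j)%:R := hv.
have ji : (j == i) = false by rewrite eq_sym (negbTE ij).
have Buv : \sum_(x < N) u x * Lap e v x = a + b.
  rewrite (eq_bigr (fun x => (x == i)%:R * (a * Lap e v x) - (x == j)%:R * (b * Lap e v x))); last first.
    by move=> x _; rewrite /u; ring.
  rewrite sumrB !sum_ind !Lv !eqxx (negbTE ij) ji /=; ring.
have Bvv : \sum_(x < N) v x * Lap e v x = v i - v j.
  rewrite (eq_bigr (fun x => (x==i)%:R * v x - (x==j)%:R * v x)); last first.
    by move=> x _; rewrite Lv; ring.
  by rewrite sumrB !sum_ind.
have Lui : Lap e u i = (deg e i)%:R * a + b * (e i j)%:R.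
  rewrite /Lap /u !eqxx (negbTE ij) /= sumrB !sum_indP ei /=; ring.
have Luj : Lap e u j = - (deg e j)%:R * b - a * (e i j)%:R.
  rewrite /Lap /u !eqxx ji /= sumrB !sum_indP ei (es j i) /=; ring.
have Buu : \sum_(x < N) u x * Lap e u x =
    (deg e i)%:R * a^+2 + 2 * a * b * (e i j)%:R + (deg e j)%:R * b^+2.
  rewrite (eq_bigr (fun x => (x==i)%:R * (a * Lap e u x) - (x==j)%:R*(b*Lap e u x))); last first.
    by move=> x _; rewrite {1}/u; ring.
  rewrite sumrB !sum_ind Lui Luj; ring.
have := Qge0 e (fun x => v x - u x).
rewrite Qexp !QB // Bvv Buv Buu.
set X := (_%:R * a ^+ 2 + _ + _).
move=> H; lra.
Qed.

Lemma half_sum (R : realFieldType) N (F : 'I_N -> 'I_N -> R) :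
  (forall i j, F i j = F j i) ->
  \sum_(i < N) \sum_(j < N) F i j
    = 2 * \sum_(i < N) \sum_(j < N | (i < j)%N) F i j + \sum_(i < N) F i i.
Proof.
move=> Fs.
under [X in _ = 2 * X + _]eq_bigr => i _ do rewrite big_mkcond.
have T : forall i j, F i j = (if (i < j)%N then F i j else 0)
     + (if (j < i)%N then F i j else 0) + (j == i)%:R * F i j.
  move=> i j; rewrite -val_eqE /=; case: (ltngtP i j) => h /=;
    by rewrite ?mul0r ?mul1r ?addr0 ?add0r.
rewrite (eq_bigr (fun i : 'I_N => \sum_(j < N) ((if (i < j)%N then F i j else 0)
     + (if (j < i)%N then F i j else 0) + (j == i)%:R * F i j))); last first.
  by move=> i _; apply: eq_bigr => j _; apply: T.
rewrite (eq_bigr (fun i : 'I_N => \sum_(j < N) (if (i < j)%N then F i j else 0)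
   + \sum_(j < N) (if (j < i)%N then F i j else 0) + F i i)); last first.
  by move=> i _; rewrite !big_split /= sum_ind.
rewrite !big_split /=.
have E2 : \sum_(i < N) \sum_(j < N) (if (j < i)%N then F i j else 0)
   = \sum_(i < N) \sum_(j < N) (if (i < j)%N then F i j else 0).
  rewrite exchange_big; apply: eq_bigr => i _; apply: eq_bigr => j _; by rewrite Fs.
rewrite E2; ring.
Qed.

Lemma edges_bound N (e : rel 'I_N) : symmetric e -> irreflexive e ->
  (2 * #|edges e| <= \sum_(x < N) deg e x)%N.
Proof.
move=> es ei.
pose A := [set p : 'I_N * 'I_N | e p.1 p.2 && (p.1 < p.2)%N].
have h1 : (#|edges e| <= #|A|)%N.
  apply: leq_trans (leq_imset_card (fun p : 'I_N * 'I_N => [set p.1; p.2]) A).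
  apply: subset_leq_card; apply/subsetP => s /imset2P [x y _].
  rewrite inE => /andP [_ exy] ->.
  case: (ltngtP x y) => h.
  - by apply/imsetP; exists (x, y) => //; rewrite inE /= exy h.
  - apply/imsetP; exists (y, x); first by rewrite inE /= es exy h.
    by rewrite /= setUC.
  - by move: exy; rewrite (val_inj h) ei.
have h2 : \sum_(x < N) deg e x = (\sum_(x < N) \sum_(y < N) (e x y && (x < y)%N)
     + \sum_(x < N) \sum_(y < N) (e x y && (y < x)%N))%N.
  rewrite -big_split; apply: eq_bigr => x _ /=; rewrite /deg -sum1_card big_mkcond -big_split /=.
  apply: eq_bigr => y _; rewrite inE; case: (ltngtP x y) => h /=.
  - by case: (e x y).
  - by case: (e x y).
  - by rewrite (val_inj h) ei.
have h3 : (\sum_(x < N) \sum_(y < N) (e x y && (y < x)%N)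
    = \sum_(x < N) \sum_(y < N) (e x y && (x < y)%N))%N.
  rewrite exchange_big; apply: eq_bigr => x _; apply: eq_bigr => y _; by rewrite es.
have h4 : (#|A| = \sum_(x < N) \sum_(y < N) (e x y && (x < y)%N))%N.
  rewrite -sum1_card big_mkcond /= [RHS]pair_big /=.
  by apply: eq_bigr => p _; rewrite inE; case: (_ && _).
by rewrite h2 h3 -h4 mul2n -addnn leq_add.
Qed.

Unset Implicit Arguments.
Set Strict Implicit.

Theorem theorem1 (R : realFieldType) (N : nat) (e : rel 'I_N)
    (Rm : 'I_N -> 'I_N -> R) :
  simple_graph e -> connected_graph e -> effective_resistance e Rm ->
  (N%:R * (N%:R - 4)) + 2 * (#|edges e|)%:R * \sum_(j < N) ((deg e j)%:R)^-1
    <= add_deg_kirchhoff e Rm.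
Proof.
move=> [es ei] _ hR.
case: N e Rm es ei hR => [|[|n]] e Rm es ei hR.
- by rewrite /add_deg_kirchhoff !big_ord0 mul0r mulr0 addr0.
- have d0 : forall x : 'I_1, deg e x = 0%N.
    move=> x; apply/eqP; rewrite cards_eq0; apply/eqP/setP => y.
    by rewrite !inE (ord1 x) (ord1 y) ei.
  rewrite /add_deg_kirchhoff [X in _ <= X]big1; last first.
    by move=> i _; apply: big1 => j; rewrite (ord1 i) (ord1 j).
  rewrite big_ord1 d0 invr0 mulr0 addr0 /=; lra.
- pose I := fun x : 'I_n.+2 => ((deg e x)%:R : R)^-1.
  have Dnz : forall x : 'I_n.+2, ((deg e x)%:R : R) != 0.
    move=> x; pose y : 'I_n.+2 := if x == ord0 then ord_max else ord0.
    have xy : x != y.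
      rewrite /y; case: ifP => [/eqP -> //|]; by move/negbT.
    have [v [hv _]] := hR x y.
    have := hv x; rewrite eqxx (negbTE xy) pnatr_eq0 => H; apply/eqP => d0.
    have S : [set y | e x y] = set0 by apply/eqP; rewrite -cards_eq0; apply/eqP.
    rewrite d0 big1 in H; last first.
      move=> z exz; have : z \in [set y | e x y] by rewrite inE.
      by rewrite S inE.
    move: H; rewrite /=; lra.
  have DI : forall x, (deg e x)%:R * I x = 1 := fun x => mulfV (Dnz x).
  have Dsq : forall x, (deg e x)%:R * I x ^+ 2 = I x.
    by move=> x; rewrite expr2 mulrA DI mul1r.
  pose G := fun i j : 'I_n.+2 => ((deg e i)%:R + (deg e j)%:R)
      * (I i + I j - 2 * (e i j)%:R * I i * I j).
  have step1 : \sum_(i < n.+2) \sum_(j < n.+2 | (i < j)%N) G i j <= add_deg_kirchhoff e Rm.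
    apply: ler_sum => i _; apply: ler_sum => j ij.
    have [v [hv ->]] := hR i j.
    apply: ler_wpM2l; first by rewrite addr_ge0 ?ler0n.
    have ij' : i != j by rewrite -val_eqE /= (ltn_eqF ij).
    apply: le_trans (pair_bound (I i) (I j) es ei ij' hv).
    by rewrite !Dsq le_eqVlt; apply/orP; left; apply/eqP; ring.
  have Gs : forall i j, G i j = G j i by move=> i j; rewrite /G es; ring.
  have hs := half_sum Gs.
  have Gexp : forall i j, G i j = 2 + (deg e i)%:R * I j + (deg e j)%:R * I i
       - 2 * ((e i j)%:R * I i) - 2 * ((e i j)%:R * I j).
    move=> i j.
    have -> : G i j = (deg e i)%:R * I i + (deg e j)%:R * I j + (deg e i)%:R * I j
       + (deg e j)%:R * I i - 2 * (e i j)%:R * ((deg e i)%:R * I i) * I j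
       - 2 * (e i j)%:R * ((deg e j)%:R * I j) * I i by rewrite /G; ring.
    rewrite !DI; ring.
  have cnt : \sum_(i < n.+2) \sum_(j < n.+2) (e i j)%:R * I i = n.+2%:R.
    under eq_bigr => i _ do rewrite -mulr_suml -degE' DI.
    by rewrite sumr_const card_ord.
  have cnt2 : \sum_(i < n.+2) \sum_(j < n.+2) (e i j)%:R * I j = n.+2%:R.
    rewrite exchange_big -cnt; apply: eq_bigr => i _; apply: eq_bigr => j _.
    by rewrite es.
  have F1 : \sum_(i < n.+2) \sum_(j < n.+2) G i j = \sum_(i < n.+2) \sum_(j < n.+2) (2 : R)
     + \sum_(i < n.+2) \sum_(j < n.+2) (deg e i)%:R * I j
     + \sum_(i < n.+2) \sum_(j < n.+2) (deg e j)%:R * I i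
     - 2 * \sum_(i < n.+2) \sum_(j < n.+2) (e i j)%:R * I i
     - 2 * \sum_(i < n.+2) \sum_(j < n.+2) (e i j)%:R * I j.
    rewrite !mulr_sumr -!big_split -!sumrB; apply: eq_bigr => i _.
    rewrite !mulr_sumr -!big_split -!sumrB; apply: eq_bigr => j _ /=; exact: Gexp.
  have s1 : \sum_(i < n.+2) \sum_(j < n.+2) (2 : R) = 2 * n.+2%:R * n.+2%:R.
    under eq_bigr => i _ do rewrite sumr_const card_ord.
    by rewrite sumr_const card_ord !mulr_natr.
  have s2 : \sum_(i < n.+2) \sum_(j < n.+2) (deg e i)%:R * I j
      = (\sum_(i < n.+2) (deg e i)%:R) * \sum_(j < n.+2) I j.
    under eq_bigr => i _ do rewrite -mulr_sumr.
    by rewrite -mulr_suml.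
  have s3 : \sum_(i < n.+2) \sum_(j < n.+2) (deg e j)%:R * I i
      = (\sum_(i < n.+2) (deg e i)%:R) * \sum_(j < n.+2) I j.
    under eq_bigr => i _ do rewrite -mulr_suml.
    by rewrite -mulr_sumr.
  have diag : \sum_(i < n.+2) G i i = 4 * n.+2%:R.
    rewrite (eq_bigr (fun _ => 4)); last first.
      move=> i _.
      have -> : G i i = 4 * ((deg e i)%:R * I i) by rewrite /G ei /=; ring.
      by rewrite DI mulr1.
    by rewrite sumr_const card_ord mulr_natr.
  have hE : 2 * (#|edges e|)%:R <= \sum_(j < n.+2) ((deg e j)%:R : R).
    by rewrite -natr_sum -(natrM _ 2) ler_nat edges_bound.
  have hSI : 0 <= \sum_(j < n.+2) I j.
    by apply: sumr_ge0 => j _; rewrite invr_ge0 ler0n.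
  rewrite F1 s1 s2 s3 cnt cnt2 diag in hs.
  have hM := ler_wpM2r hSI hE.
  move: step1 hs hM hSI.
  rewrite -/(I _).
  set SD := \sum_(i < n.+2) (deg e i)%:R.
  set SI := \sum_(j < n.+2) I j.
  set H := \sum_(i < n.+2) \sum_(j < n.+2 | (i < j)%N) G i j.
  set M := (#|edges e|)%:R.
  set K := n.+2%:R.
  move=> h1 h2 h3 h4; nra.
Qed.
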